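(* Let $A$ and $B$ be symmetric $N\times N$ real matrices, and suppose $B$ has only $K\le N$ non-zero eigenvalues $\lambda_1^B,\dots,\lambda_K^B$. Let $\lambda_1^A,\dots,\lambda_K^A$ be the $K$ largest in absolute value eigenvalues of $A$. Then $$\Big|\sum_{k=1}^K\lambda_k^A-\sum_{k=1}^K\lambda_k^B\Big|\le 3K\|A-B\|.$$
   Context: $\|\cdot\|$ denotes the spectral (operator) norm. Eigenvalues are counted with multiplicity. *)

(* Defs.v *)
From HB Require Import structures.
From mathcomp Require Import all_boot all_order all_algebra.
From mathcomp Require Import boolp classical_sets reals.
Set Implicit Arguments. Unset Strict Implicit. Unset Printing Implicit Defensive.
Import Order.TTheory GRing.Theory Num.Theory.
Local Open Scope ring_scope.
Local Open Scope classical_set_scope.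

Definition vnorm (R : realType) (n : nat) (v : 'cV[R]_n) : R :=
  Num.sqrt (\sum_(i < n) v i 0 ^+ 2).

Definition opnorm (R : realType) (n : nat) (M : 'M[R]_n) : R :=
  sup [set vnorm (M *m v) | v in [set v : 'cV[R]_n | vnorm v = 1]].

Definition eigenvalues_seq (R : realType) (n : nat) (M : 'M[R]_n) (s : seq R) : Prop :=
  char_poly M = \prod_(x <- s) ('X - x%:P).

(* Main.v *)
Require Import Defs.
From mathcomp Require Import all_boot all_order all_algebra.
From mathcomp Require Import reals.
From mathcomp Require Import complex sesquilinear spectral.
From mathcomp Require Import boolp classical_sets.
From mathcomp Require Import ring lra zify.
Set Implicit Arguments. Unset Strict Implicit. Unset Printing Implicit Defensive.
Import Order.TTheory GRing.Theory Num.Theory.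
Local Open Scope ring_scope.
Local Open Scope sesquilinear_scope.

Section Spec.
Variable R : realType.
Local Notation C := (R[i]).
Local Notation emb := (real_complex R).
Variable N : nat.

Lemma emb_real (x : R) : (emb x : C) \is Num.real.
Proof. by rewrite realE !lecR ?le_total // -realE num_real. Qed.

Lemma real_emb (x : C) : x \is Num.real -> x = emb (complex.Re x).
Proof.
case: x => a b; rewrite realE !lecE /= => /orP[] /andP[/eqP H _].
  by rewrite H.
by rewrite -H.
Qed.

Lemma char_poly_conj (P M : 'M[C]_N) : P \in unitmx ->
  char_poly (invmx P *m M *m P) = char_poly M.
Proof.
move=> Pu; rewrite /char_poly.
have -> : char_poly_mx (invmx P *m M *m P) =
  map_mx polyC (invmx P) *m char_poly_mx M *m map_mx polyC P.
  rewrite /char_poly_mx mulmxBr mulmxBl -!map_mxM.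
  congr (_ - _).
  by rewrite -mulmxA -scalar_mxC mulmxA -map_mxM mulVmx // map_mx1 mul1mx.
rewrite !det_mulmx !det_map_mx /= mulrC mulrA -rmorphM det_inv mulrV -?unitmxE //.
by rewrite rmorph1 mul1r.
Qed.


Lemma spec (A : 'M[R]_N) : A^T = A -> exists P : 'M[C]_N, exists r : 'I_N -> R,
  [/\ P \is unitarymx, map_mx emb A = P^t* *m diag_mx (\row_i emb (r i)) *m P
    & char_poly A = \prod_i ('X - (r i)%:P)].
Proof.
move=> tA.
set AC := map_mx emb A.
have herm : AC \is hermsymmx.
  apply: realsym_hermsym.
    by apply/is_hermitianmxP; rewrite expr0 scale1r map_mx_id // /AC map_trmx tA.
  by apply/mxOverP => i j; rewrite mxE emb_real.
have /orthomx_spectralP Aeq := hermitian_normalmx herm.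
have dreal := hermitian_spectral_diag_real herm.
exists (spectralmx AC), (fun i => complex.Re (spectral_diag AC 0 i)).
have dE : \row_i emb (complex.Re (spectral_diag AC 0 i)) = spectral_diag AC.
  by apply/rowP => i; rewrite mxE -real_emb //; exact: mxOverP.
split.
- exact: spectral_unitarymx.
- by rewrite dE -invmx_unitary ?spectral_unitarymx.
apply: (@map_poly_inj _ _ emb).
rewrite map_char_poly -/AC {1}Aeq char_poly_conj ?spectral_unit //.
rewrite char_poly_trig ?diag_mx_is_trig // rmorph_prod.
apply: eq_bigr => i _; rewrite mxE eqxx mulr1n rmorphB /= map_polyX map_polyC /=.
by rewrite -[spectral_diag AC in LHS]dE mxE.
Qed.


Lemma trC_mul m n p (X : 'M[C]_(m, n)) (Y : 'M[C]_(n, p)) : (X *m Y)^t* = Y^t* *m X^t*.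
Proof. by rewrite trmx_mul map_mxM. Qed.

Lemma qf_diag (P : 'M[C]_N) (d : 'I_N -> R) (x : 'rV[C]_N) : P \is unitarymx ->
  (x *m (P^t* *m diag_mx (\row_i emb (d i)) *m P) *m x^t*) 0 0 =
  \sum_j emb (d j) * ((x *m P^t*) 0 j * ((x *m P^t*) 0 j)^*).
Proof.
move=> Pu.
have -> : x *m (P^t* *m diag_mx (\row_i emb (d i)) *m P) *m x^t* =
   (x *m P^t*) *m diag_mx (\row_i emb (d i)) *m (x *m P^t*)^t*.
  by rewrite trC_mul trmxCK !mulmxA.
rewrite mxE; apply: eq_bigr => j _.
by rewrite mul_mx_diag !mxE mulrA [_ * emb _]mulrC.
Qed.

Lemma qf_id (P : 'M[C]_N) (x : 'rV[C]_N) : P \is unitarymx ->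
  (x *m x^t*) 0 0 = \sum_j ((x *m P^t*) 0 j * ((x *m P^t*) 0 j)^*).
Proof.
move=> Pu.
have -> : x *m x^t* = (x *m P^t*) *m (x *m P^t*)^t*.
  by rewrite trC_mul trmxCK mulmxA mulmxKtV.
by rewrite mxE; apply: eq_bigr => j _; rewrite !mxE.
Qed.


Lemma vnorm_ge0 (v : 'cV[R]_N) : 0 <= vnorm v.
Proof. exact: sqrtr_ge0. Qed.

Lemma vnorm_sq (v : 'cV[R]_N) : vnorm v ^+ 2 = \sum_i v i 0 ^+ 2.
Proof. by rewrite sqr_sqrtr // sumr_ge0 // => i _; rewrite sqr_ge0. Qed.

Lemma vnormZ (c : R) (v : 'cV[R]_N) : vnorm (c *: v) = `|c| * vnorm v.
Proof.
rewrite /vnorm -sqrtr_sqr -sqrtrM ?sqr_ge0 // mulr_sumr; congr Num.sqrt.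
by apply: eq_bigr => i _; rewrite mxE exprMn.
Qed.

Lemma vnorm_eq0 (v : 'cV[R]_N) : vnorm v = 0 -> v = 0.
Proof.
move=> h; have : \sum_i v i 0 ^+ 2 = 0 by rewrite -vnorm_sq h expr0n.
move/eqP; rewrite psumr_eq0 => [/allP H|i _]; last exact: sqr_ge0.
apply/matrixP => i j; rewrite ord1 mxE; apply/eqP; rewrite -sqrf_eq0.
by apply: (implyP (H i (mem_index_enum _))).
Qed.

Lemma sum_sq_le (a : 'I_N -> R) : (forall i, 0 <= a i) ->
  \sum_i a i ^+ 2 <= (\sum_i a i) ^+ 2.
Proof.
move=> a0; rewrite expr2 mulr_suml; apply: ler_sum => i _.
rewrite expr2 ler_wpM2l //.
by rewrite (bigD1 i) //= lerDl sumr_ge0.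
Qed.

Lemma vnorm_le_l1 (v : 'cV[R]_N) : vnorm v <= \sum_i `|v i 0|.
Proof.
rewrite -(ler_pXn2r (_ : 0 < 2)%N) ?nnegrE ?vnorm_ge0 ?sumr_ge0 //.
rewrite vnorm_sq; apply: le_trans (sum_sq_le _) => //.
by apply: ler_sum => i _; rewrite real_normK ?num_real.
Qed.

Lemma unit_entry (w : 'cV[R]_N) j : vnorm w = 1 -> `|w j 0| <= 1.
Proof.
move=> h; have : w j 0 ^+ 2 <= 1.
  rewrite -(expr1n _ 2) -h vnorm_sq (bigD1 j) //= lerDl sumr_ge0 // => i _.
  exact: sqr_ge0.
rewrite -real_normK ?num_real // => H.
have := normr_ge0 (w j 0); nra.
Qed.

Lemma opnorm_bound (M : 'M[R]_N) (v : 'cV[R]_N) :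
  vnorm (M *m v) <= opnorm M * vnorm v.
Proof.
have hub : has_ubound [set vnorm (M *m v) | v in [set v : 'cV[R]_N | vnorm v = 1]].
  exists (\sum_i \sum_j `|M i j|) => _ [w /= w1 <-].
  apply: le_trans (vnorm_le_l1 _) _; apply: ler_sum => i _.
  rewrite mxE; apply: le_trans (ler_norm_sum _ _ _) _.
  apply: ler_sum => j _; rewrite normrM ler_piMr //.
  exact: unit_entry.
have [v0|vn0] := eqVneq (vnorm v) 0.
  have z : vnorm (0 : 'cV[R]_N) = 0.
    by rewrite /vnorm big1 ?sqrtr0 // => i _; rewrite mxE expr0n.
  by rewrite (vnorm_eq0 v0) mulmx0 z mulr0.
have vpos : 0 < vnorm v by rewrite lt_def vn0 vnorm_ge0.
set w := (vnorm v)^-1 *: v.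
have w1 : vnorm w = 1 by rewrite vnormZ normfV ger0_norm ?vnorm_ge0 // mulVf.
have := ub_le_sup hub (ex_intro2 _ _ w w1 erefl).
rewrite /opnorm -scalemxAr vnormZ normfV ger0_norm ?vnorm_ge0 //.
by rewrite ler_pdivrMl // mulrC.
Qed.


Lemma eig_bound (M : 'M[R]_N) (m : 'I_N -> R) : M^T = M ->
  char_poly M = \prod_i ('X - (m i)%:P) -> forall i, m i <= opnorm M.
Proof.
move=> tM cp i.
have : eigenvalue M (m i).
  rewrite eigenvalue_root_char cp /root horner_prod (bigD1 i) //=.
  by rewrite hornerXsubC subrr mul0r.
case/eigenvalueP => v vM vn0.
have Mu : M *m v^T = m i *: v^T.
  by rewrite -[in LHS]tM -trmx_mul vM linearZ.
have := opnorm_bound M v^T; rewrite Mu vnormZ.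
have upos : 0 < vnorm v^T.
  rewrite lt_def vnorm_ge0 andbT; apply/eqP => /vnorm_eq0 /(congr1 trmx).
  by rewrite trmxK trmx0; apply/eqP.
rewrite ler_pM2r // => h; exact: le_trans (ler_norm _) h.
Qed.

Lemma qf_bound (M : 'M[R]_N) : M^T = M -> forall x : 'rV[C]_N,
  (x *m map_mx emb M *m x^t*) 0 0 <= emb (opnorm M) * (x *m x^t*) 0 0.
Proof.
move=> tM x; have [P [m [Pu Meq cp]]] := spec tM.
rewrite Meq qf_diag // (qf_id x Pu) mulr_sumr; apply: ler_sum => j _.
by rewrite ler_wpM2r ?mul_conjC_ge0 // lecR (eig_bound tM).
Qed.


Lemma rowsub_unitary m (f : 'I_m -> 'I_N) (P : 'M[C]_N) :
  injective f -> P \is unitarymx -> rowsub f P \is unitarymx.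
Proof.
move=> finj Pu; apply/unitarymxP/matrixP => k l.
have /matrixP /(_ (f k) (f l)) := unitarymxP Pu.
rewrite !mxE (inj_eq finj) => <-; apply: eq_bigr => j _; rewrite !mxE.
by [].
Qed.

Lemma support (P : 'M[C]_N) (S : {set 'I_N}) (x : 'rV[C]_N) : P \is unitarymx ->
  (x <= rowsub (@enum_val _ (mem S)) P)%MS -> forall j, j \notin S -> (x *m P^t*) 0 j = 0.
Proof.
move=> Pu /submxP [D ->] j jS.
rewrite rowsubE mulmxA mulmxtVK // mxE big1 // => k _; rewrite !mxE.
case: eqP => [e|]; last by rewrite mulr0.
by move: jS; rewrite -e enum_valP.
Qed.


Lemma weyl_count (AC BC PA PB : 'M[C]_N) (ra rb : 'I_N -> R) (e t : R) :
  PA \is unitarymx -> PB \is unitarymx ->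
  AC = PA^t* *m diag_mx (\row_i emb (ra i)) *m PA ->
  BC = PB^t* *m diag_mx (\row_i emb (rb i)) *m PB ->
  (forall x : 'rV[C]_N, (x *m (AC - BC) *m x^t*) 0 0 <= emb e * (x *m x^t*) 0 0) ->
  (#|[set i | (t + e < ra i)%R]| <= #|[set i | (t < rb i)%R]|)%N.
Proof.
move=> PAu PBu Aeq Beq hyp.
set SA := [set i | t + e < ra i]; set SB := [set i | rb i <= t].
have cSB : (#|SB| + #|[set i | (t < rb i)%R]| = N)%N.
  have -> : SB = ~: [set i | t < rb i] by apply/setP => i; rewrite !inE -leNgt.
  by rewrite addnC cardsC card_ord.
rewrite leqNgt; apply/negP => hlt.
set UA := rowsub (@enum_val _ (mem SA)) PA.
set UB := rowsub (@enum_val _ (mem SB)) PB.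
have rA : \rank UA = #|SA|.
  by apply: mxrank_unitary; apply: rowsub_unitary => //; exact: enum_val_inj.
have rB : \rank UB = #|SB|.
  by apply: mxrank_unitary; apply: rowsub_unitary => //; exact: enum_val_inj.
have : (UA :&: UB)%MS != 0.
  rewrite -mxrank_eq0; have := mxrank_sum_cap UA UB.
  have := rank_leq_col (UA + UB)%MS.
  rewrite rA rB; lia.
case/rowV0Pn => x; rewrite sub_capmx => /andP [xA xB] xn0.
have zaS := support PAu xA; have zbS := support PBu xB.
set za := x *m PA^t* in zaS; set zb := x *m PB^t* in zbS.
have za0 : za != 0.
  by apply: contraNneq xn0 => h; rewrite -(mulmxKtV x PAu erefl) -/za h mul0mx.
have [j0 zj0] : exists j, za 0 j != 0.
  case: (pickP (fun j => za 0 j != 0)) => [j hj|h]; first by exists j.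
  have e0 : za = 0 by apply/rowP => j; have := h j; move=> /= /negbFE/eqP ->; rewrite mxE.
  by rewrite e0 eqxx in za0.
set a := (x *m AC *m x^t*) 0 0; set b := (x *m BC *m x^t*) 0 0.
set n := (x *m x^t*) 0 0.
have ha : emb (t + e) * n < a.
  rewrite /a Aeq qf_diag // /n (qf_id x PAu) -/za -subr_gt0 mulr_sumr -sumrB.
  rewrite (bigD1 j0) //=; apply: ltr_wpDr.
    apply: sumr_ge0 => j _; rewrite -mulrBl.
    case: (boolP (j \in SA)) => jS.
      by rewrite mulr_ge0 ?mul_conjC_ge0 // subr_ge0 lecR; move: jS; rewrite inE => /ltW.
    by rewrite zaS // mul0r mulr0.
  rewrite -mulrBl mulr_gt0 ?mul_conjC_gt0 // subr_gt0 ltcR.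
  case: (boolP (j0 \in SA)); first by rewrite inE.
  by move=> /zaS h; rewrite h eqxx in zj0.
have hb : b <= emb t * n.
  rewrite /b Beq qf_diag // /n (qf_id x PBu) -/zb -subr_ge0 mulr_sumr -sumrB.
  apply: sumr_ge0 => j _; rewrite -mulrBl.
  case: (boolP (j \in SB)) => jS.
    by rewrite mulr_ge0 ?mul_conjC_ge0 // subr_ge0 lecR; move: jS; rewrite inE.
  by rewrite zbS // mul0r mulr0.
have hab : (x *m (AC - BC) *m x^t*) 0 0 = a - b.
  by rewrite mulmxBr mulmxBl /a /b !mxE.
have := hyp x; rewrite hab => h.
have := ltr_leB ha hb.
rewrite -mulrBl -rmorphB addrAC subrr add0r => h2.
by have := lt_le_trans h2 h; rewrite ltxx.
Qed.

End Spec.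

Section Lists.
Variable R : realType.

Lemma sorted_pair (a b : seq R) (e : R) : sorted <=%R a -> sorted <=%R b ->
  size a = size b ->
  (forall t, count (fun x => (t + e < x)%R) a <= count (fun x => (t < x)%R) b)%N ->
  forall i, (i < size a)%N -> nth 0 a i <= nth 0 b i + e.
Proof.
move=> sa sb hs hc i ia.
rewrite leNgt; apply/negP => hlt.
have h := hc (nth 0 b i).
have c1 : (size a - i <= count (fun x => (nth 0 b i + e < x)%R) a)%N.
  rewrite -[in X in (_ <= X)%N](cat_take_drop i a) count_cat.
  have -> : count (fun x => (nth 0 b i + e < x)%R) (drop i a) = size (drop i a).
    apply/eqP; rewrite -all_count; apply/(all_nthP 0) => k; rewrite size_drop => hk.
    rewrite nth_drop; apply: lt_le_trans hlt _.
    apply: (sorted_leq_nth le_trans lexx) => //; rewrite ?inE.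
      by rewrite -ltn_subRL.
    clear; lia.
  by rewrite size_drop leq_addl.
have c2 : (count (fun x => (nth 0 b i < x)%R) b <= size b - i.+1)%N.
  rewrite -[b in count _ b](cat_take_drop i.+1 b) count_cat.
  have -> : count (fun x => (nth 0 b i < x)%R) (take i.+1 b) = 0%N.
    apply/eqP; rewrite -leqn0 leqNgt -has_count; apply/negP => /(has_nthP 0) [k].
    rewrite size_take => hk.
    have hk' : (k < i.+1)%N by move: hk; case: ifP => [_|/negbT]; lia.
    have hk2 : (k < size b)%N by move: hk; case: ifP => [h1|/negbT]; lia.
    rewrite nth_take // ltNge (sorted_leq_nth le_trans lexx) // ?inE.
      by rewrite -hs.
  by rewrite add0n; apply: leq_trans (count_size _ _) _; rewrite size_drop.
have := leq_trans c1 (leq_trans h c2); rewrite -hs; lia.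
Qed.


Lemma sum_bound (T : eqType) (s : seq T) (Q : pred T) (f : T -> R) (c : R) :
  (forall p, p \in s -> Q p -> `|f p| <= c) ->
  `|\sum_(p <- s | Q p) f p| <= (count Q s)%:R * c.
Proof.
elim: s => [|x s IH] h; first by rewrite big_nil normr0 mul0r.
rewrite big_cons /=; have IH' := IH (fun p ps => h p (@mem_behead _ (x :: s) _ ps)).
case: ifP => Qx.
  rewrite add1n -addn1 natrD mulrDl mul1r addrC.
  apply: le_trans (ler_normD _ _) _; apply: lerD => //.
  by apply: h => //; rewrite mem_head.
by rewrite add0n.
Qed.

Lemma final_comb (Z : seq (R * R)) (e : R) (K : nat) :
  (forall p, p \in Z -> `|p.1 - p.2| <= e) ->
  sorted (fun x y => `|y.1| <= `|x.1|) Z ->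
  count (fun p => p.2 != 0) Z = K ->
  `|\sum_(p <- take K Z) p.1 - \sum_(p <- Z | p.2 != 0) p.2| <= 3 * K%:R * e.
Proof.
move=> hZ sZ cK.
case: Z hZ sZ cK => [|z0 Z'] hZ sZ cK.
  by rewrite -cK /= !big_nil subrr normr0 mulr0 mul0r.
have e0 : 0 <= e by apply: le_trans (hZ z0 (mem_head _ _)).
set Z := z0 :: Z' in hZ sZ cK *.
have KZ : (K <= size Z)%N by rewrite -cK count_size.
set L1 := take K Z; set L2 := drop K Z.
have ZE : Z = L1 ++ L2 by rewrite cat_take_drop.
have sL1 : size L1 = K by rewrite size_take_min; apply/minn_idPl.
have rel12 : forall p q, p \in L1 -> q \in L2 -> `|q.1| <= `|p.1|.
  move: sZ; rewrite sorted_pairwise; last first.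
    by move=> x y w h1 h2; apply: le_trans h2 h1.
  rewrite ZE pairwise_cat => /and3P [/allrelP H _ _] p q pL qL; exact: H.
have hL1 : forall p, p \in L1 -> `|p.1 - p.2| <= e.
  by move=> p pL; apply: hZ; rewrite ZE mem_cat pL.
have hL2 : forall p, p \in L2 -> `|p.1 - p.2| <= e.
  by move=> p pL; apply: hZ; rewrite ZE mem_cat pL orbT.
set P := fun p : R * R => p.2 != 0.
set c1 := count P L1.
have m1E : count (predC P) L1 = (K - c1)%N.
  by rewrite -sL1 -(count_predC P L1) /c1 addKn.
have m2E : count P L2 = (K - c1)%N.
  by move: cK; rewrite ZE count_cat -/c1 => <-; rewrite addKn.
have c1K : (c1 <= K)%N by rewrite -sL1 count_size.
rewrite (bigID P) /= ZE big_cat /=.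
have -> : forall a b c d : R, a + b - (c + d) = (a - c) + b - d.
  by move=> a b c d; ring.
rewrite -sumrB.
have b1 : `|\sum_(p <- L1 | P p) (p.1 - p.2)| <= c1%:R * e.
  by apply: sum_bound => p pL _; exact: hL1.
have b2 : `|\sum_(p <- L1 | ~~ P p) p.1| <= (K - c1)%:R * e.
  rewrite -m1E; apply: sum_bound => p pL /negbNE /eqP hp.
  by have := hL1 p pL; rewrite hp subr0.
have b3 : `|\sum_(p <- L2 | P p) p.2| <= (K - c1)%:R * (e + e).
  rewrite -m2E; apply: sum_bound => q qL Pq.
  have : has (predC P) L1.
    rewrite has_count m1E; move: m2E; have : (0 < count P L2)%N.
      by rewrite -has_count; apply/hasP; exists q.
    lia.
  case/hasP => p pL /negbNE /eqP hp.
  have hq := hL2 q qL; have hp' := hL1 p pL; rewrite hp subr0 in hp'.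
  have := rel12 p q pL qL.
  have E : q.1 - (q.1 - q.2) = q.2 by ring.
  have := ler_normB q.1 (q.1 - q.2); rewrite E.
  lra.
apply: le_trans (ler_normB _ _) _; apply: le_trans (lerD (ler_normD _ _) b3) _.
apply: le_trans (lerD (lerD b1 b2) (lexx _)) _.
have -> : K = (c1 + (K - c1))%N by rewrite subnKC.
rewrite addKn natrD; set d := (K - c1)%:R.
have := mulr_ge0 (ler0n R c1) e0; have := mulr_ge0 (ler0n R (K - c1)) e0.
rewrite -/d; nra.
Qed.

End Lists.


Lemma perm_lift (T1 T2 : eqType) (s : seq (T1 * T2)) (t : seq T1) :
  perm_eq (map fst s) t -> exists s', perm_eq s s' /\ map fst s' = t.
Proof.
elim: t s => [|x t IH] s h.
  exists [::]; split => //; move/perm_size: h; case: s => //.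
have : x \in map fst s by rewrite (perm_mem h) mem_head.
case/mapP => p ps xE.
have hs := perm_to_rem ps.
have : perm_eq (map fst (rem p s)) t.
  rewrite -(perm_cons x); apply: perm_trans h.
  by rewrite perm_sym xE -/(map fst (p :: rem p s)) perm_map // perm_sym.
case/IH => s'' [h1 h2]; exists (p :: s''); split.
  by apply: perm_trans hs _; rewrite perm_cons.
by rewrite /= h2 xE.
Qed.

Lemma card_count (R : realType) N (p : pred R) (f : 'I_N -> R) :
  count p [seq f i | i <- enum 'I_N] = #|[set i | p (f i)]|.
Proof. by rewrite count_map cardsE cardE size_filter enumT. Qed.

Unset Implicit Arguments.

Theorem lemmaA1 (R : realType) (N K : nat) (A B : 'M[R]_N)
  (sA sB sA' : seq R) :
  A^T = A -> B^T = B ->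
  eigenvalues_seq A sA -> eigenvalues_seq B sB ->
  count (fun x => x != 0) sB = K ->
  (* sA' : the eigenvalues of A, ordered by nonincreasing absolute value *)
  perm_eq sA' sA -> sorted (fun x y => `|y| <= `|x|) sA' ->
  `| \sum_(x <- take K sA') x - \sum_(x <- sB | x != 0) x |
    <= 3 * K%:R * opnorm (A - B).
Proof.
move=> tA tB eA eB cK pA' srt.
have [PA [ra [PAu Aeq cpA]]] := spec tA.
have [PB [rb [PBu Beq cpB]]] := spec tB.
set e := opnorm (A - B).
have tAB : (A - B)^T = A - B by rewrite linearB /= tA tB.
have tBA : (B - A)^T = B - A by rewrite linearB /= tA tB.
have eBA : opnorm (B - A) = e.
  rewrite /e /opnorm; congr sup; apply/seteqP; split => _ [v hv <-]; exists v => //.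
    by rewrite -opprB mulNmx /vnorm; congr Num.sqrt; apply: eq_bigr => i _; rewrite mxE sqrrN.
  by rewrite -opprB mulNmx /vnorm; congr Num.sqrt; apply: eq_bigr => i _; rewrite mxE sqrrN.
have hAB := qf_bound tAB; have hBA := qf_bound tBA.
rewrite map_mxB /= in hAB; rewrite map_mxB eBA /= in hBA.
rewrite Aeq Beq in hAB hBA.
set la := [seq ra i | i <- enum 'I_N]; set lb := [seq rb i | i <- enum 'I_N].
set a := sort <=%R la; set b := sort <=%R lb.
have pa : perm_eq a la by rewrite perm_sort.
have pb : perm_eq b lb by rewrite perm_sort.
have sa : sorted <=%R a := sort_sorted le_total _.
have sb : sorted <=%R b := sort_sorted le_total _.
have sza : size a = N by rewrite (perm_size pa) size_map size_enum_ord.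
have szb : size b = N by rewrite (perm_size pb) size_map size_enum_ord.
have c1 : forall t, (count (fun x => (t + e < x)%R) a <= count (fun x => (t < x)%R) b)%N.
  move=> t; rewrite (permP pa) (permP pb) !card_count.
  exact: (weyl_count t PAu PBu erefl erefl hAB).
have c2 : forall t, (count (fun x => (t + e < x)%R) b <= count (fun x => (t < x)%R) a)%N.
  move=> t; rewrite (permP pa) (permP pb) !card_count.
  exact: (weyl_count t PBu PAu erefl erefl hBA).
have sab := sorted_pair sa sb (etrans sza (esym szb)) c1.
have sba := sorted_pair sb sa (etrans szb (esym sza)) c2.
set Z := zip a b.
have hZ : forall p, p \in Z -> `|p.1 - p.2| <= e.
  move=> p /(nthP (0, 0)) [k]; rewrite size_zip sza szb minnn => iN <-.
  rewrite nth_zip ?sza ?szb //=.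
  have := sab k; have := sba k; rewrite sza szb => h1 h2.
  have := h1 iN; have := h2 iN; rewrite ler_distl; lra.
have pla : perm_eq sA la.
  apply: prod_XsubC_eq; rewrite -eA cpA big_map big_enum /=.
  by apply: eq_bigl => i; rewrite inE.
have plb : perm_eq sB lb.
  apply: prod_XsubC_eq; rewrite -eB cpB big_map big_enum /=.
  by apply: eq_bigl => i; rewrite inE.
have hmapZ : map fst Z = a by apply: unzip1_zip; rewrite sza szb.
have hmapZ2 : map snd Z = b by apply: unzip2_zip; rewrite sza szb.
have : perm_eq (map fst Z) sA'.
  rewrite hmapZ perm_sym; apply: perm_trans pA' _; apply: perm_trans pla _.
  by rewrite perm_sym.
case/perm_lift => Z' [pZ mZ'].
have hZ' : forall p, p \in Z' -> `|p.1 - p.2| <= e.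
  by move=> p; rewrite -(perm_mem pZ); exact: hZ.
have sZ' : sorted (fun x y => `|y.1| <= `|x.1|) Z' by move: srt; rewrite -mZ' sorted_map.
have pbB : perm_eq (map snd Z') sB.
  have pZs : perm_eq Z' Z by rewrite perm_sym.
  apply: perm_trans (perm_map snd pZs) _.
  by rewrite hmapZ2; apply: perm_trans pb _; rewrite perm_sym.
have cK' : count (fun p => p.2 != 0) Z' = K.
  by rewrite -cK -(permP pbB) count_map.
have := final_comb hZ' sZ' cK'.
rewrite -mZ' -map_take big_map.
have -> : \sum_(p <- Z' | p.2 != 0) p.2 = \sum_(x <- sB | x != 0) x.
  by rewrite -(perm_big _ pbB) big_map.
by [].
Qed.
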